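(* Let $d\ge 2$ and let $\{\tau_e: e\in\mathcal E^d\}$ be i.i.d. non-negative edge weights on the nearest-neighbor edges $\mathcal E^d$ of $\mathbb Z^d$, satisfying the standing assumption described in the context. Fix $x\in\mathbb Z^d$ and let $\pi^{(x)}$ be the distinguished geodesic from $0$ to $x$. Then for any $t>0$ and any $e\in\mathcal E^d$, $$\mathbb P\big(\tau_e\le t \,\big|\, e\in \pi^{(x)}\big)\ \ge\ \mathbb P(\tau_e\le t).$$
   Context: Setting: $d\ge2$; $\mathcal E^d$ is the set of nearest-neighbor edges of $\mathbb Z^d$; $\{\tau_e\}$ are i.i.d. non-negative random variables with law $\mu$, distribution function $F$, and essential infimum $r$. Standing assumption: $F(r)<p_c(d)$ if $r=0$ and $F(r)<\vec p_c(d)$ if $r>0$, where $p_c(d)$ is the critical probability of Bernoulli bond percolation on $\mathbb Z^d$ and $\vec p_c(d)$ that of oriented bond percolation on $\mathbb Z^d$. The passage time of a path $\gamma$ is $T(\gamma)=\sum_{e\in\gamma}\tau_e$, and $T(x,y)=\inf T(\gamma)$ over vertex self-avoiding nearest-neighbor paths from $x$ to $y$. A geodesic from $x$ to $y$ is a vertex self-avoiding path $\gamma$ from $x$ to $y$ with $T(\gamma)=T(x,y)$. Fix an arbitrary deterministic ordering of all finite vertex self-avoiding lattice paths; $\pi^{(x)}$ denotes the first geodesic from $0$ to $x$ in this ordering. *)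

(* Defs.v *)
From HB Require Import structures.
From mathcomp Require Import all_boot all_order all_algebra.
From mathcomp Require Import finmap.
From mathcomp Require Import all_classical all_reals all_analysis.
Set Implicit Arguments. Unset Strict Implicit. Unset Printing Implicit Defensive.
Import Order.TTheory GRing.Theory Num.Theory.
Local Open Scope classical_set_scope.
Local Open Scope ring_scope.

Definition vertex (n : nat) := 'rV[int]_n.
Definition origin (n : nat) : vertex n := 0.
Definition unitv (n : nat) (i : 'I_n) : vertex n := delta_mx 0 i.

(* The nearest-neighbour edge {v, v + e_i} is encoded (bijectively) by (v, i). *)
Definition edge (n : nat) := (vertex n * 'I_n)%type.

(* A lattice path = starting vertex + list of unit steps (i, +) or (i, -). *)
Definition step (n : nat) := ('I_n * bool)%type.
Definition lpath (n : nat) := (vertex n * seq (step n))%type.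

Section Paths.
Variable n : nat.
Implicit Types (v : vertex n) (s : step n) (p : lpath n).

Definition step_to v s : vertex n :=
  if s.2 then v + unitv s.1 else v - unitv s.1.
Definition step_edge v s : edge n :=
  if s.2 then (v, s.1) else (v - unitv s.1, s.1).
Definition traj p : seq (vertex n) := p.1 :: scanl step_to p.1 p.2.
Definition pstart p : vertex n := p.1.
Definition pend p : vertex n := last p.1 (scanl step_to p.1 p.2).
Definition path_edges p : seq (edge n) :=
  [seq step_edge vs.1 vs.2 | vs <- zip (traj p) p.2].
Definition self_avoiding p : bool := uniq (traj p).
Definition saw_from_to (x y : vertex n) p : Prop :=
  [/\ pstart p = x, pend p = y & self_avoiding p].
End Paths.

Section FPP.
Context {R : realType} (n : nat).
Implicit Types (tau : edge n -> R) (p : lpath n).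

Definition passage_time tau p : R := \sum_(e <- path_edges p) tau e.
Definition fpp_time tau (x y : vertex n) : R :=
  inf [set passage_time tau p | p in [set p | saw_from_to x y p]].
Definition geodesic tau (x y : vertex n) p : Prop :=
  saw_from_to x y p /\ passage_time tau p = fpp_time tau x y.
(* [rank] encodes the fixed deterministic ordering of finite self-avoiding
   paths; [first_geodesic rank tau x p] says that p is pi^(x). *)
Definition first_geodesic (rank : lpath n -> nat) tau (x : vertex n) p : Prop :=
  geodesic tau (origin n) x p /\
  forall q, geodesic tau (origin n) x q -> (rank p <= rank q)%N.
End FPP.

Section Indep.
Context {R : realType} {d : measure_display} {T : measurableType d}.
Context (P : probability T R) {I : choiceType}.

Definition iid_indep (X : I -> T -> R) : Prop :=
  forall (S : {fset I}) (B : I -> set R), (forall i, measurable (B i)) ->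
    P (\bigcap_(i in [set` S]) (X i @^-1` B i)) =
    (\prod_(i <- S) P (X i @^-1` B i))%E.

Definition events_indep (A : I -> set T) : Prop :=
  forall (S : {fset I}),
    P (\bigcap_(i in [set` S]) A i) = (\prod_(i <- S) P (A i))%E.
End Indep.

Section Perc.
Context {R : realType} (n : nat).
Implicit Types (w : edge n -> bool) (p : lpath n).

Definition open_path w p : bool := all w (path_edges p).
Definition oriented p : bool := all (fun s : step n => s.2) p.2.

Definition percolates w : Prop :=
  infinite_set [set y | exists p, [/\ pstart p = origin n, pend p = y & open_path w p]].
Definition oriented_percolates w : Prop :=
  infinite_set [set y | exists p,
    [/\ pstart p = origin n, pend p = y, oriented p & open_path w p]].

Definition bernoulli_family {d : measure_display} {T : measurableType d}
  (Q : probability T R) (w : edge n -> T -> bool) (q : R) : Prop :=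
  [/\ forall e, measurable [set t | w e t],
      forall e, Q [set t | w e t] = q%:E &
      events_indep Q (fun e => [set t | w e t])].

Definition no_percolation (q : R) : Prop :=
  forall (d : measure_display) (T : measurableType d) (Q : probability T R)
         (w : edge n -> T -> bool),
    bernoulli_family Q w q -> Q [set t | percolates (w^~ t)] = 0%E.
Definition no_oriented_percolation (q : R) : Prop :=
  forall (d : measure_display) (T : measurableType d) (Q : probability T R)
         (w : edge n -> T -> bool),
    bernoulli_family Q w q -> Q [set t | oriented_percolates (w^~ t)] = 0%E.

Definition p_c : R := sup [set q : R | 0 <= q <= 1 /\ no_percolation q].
Definition vec_p_c : R := sup [set q : R | 0 <= q <= 1 /\ no_oriented_percolation q].
End Perc.

Section Law.
Context {R : realType} (mu : probability R R).
Definition distF (t : R) : \bar R := mu [set x | x <= t].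
Definition ess_inf_law : R := sup [set s : R | mu [set x | x < s] = 0%E].
End Law.

(* Main.v *)
Require Import Defs.
From HB Require Import structures.
From mathcomp Require Import all_boot all_order all_algebra.
From mathcomp Require Import finmap.
From mathcomp Require Import all_classical all_reals all_analysis.
From mathcomp Require Import lra ring.
Import Order.TTheory GRing.Theory Num.Theory.
Local Open Scope classical_set_scope.
Local Open Scope ring_scope.

Section Det.
Variable n : nat.
Implicit Types (v : vertex n) (s : step n) (p : lpath n).

Lemma traj_cons v s r : traj (v, s :: r) = v :: traj (step_to v s, r).
Proof. by []. Qed.
Lemma edges_cons v s r :
  path_edges (v, s :: r) = step_edge v s :: path_edges (step_to v s, r).
Proof. by []. Qed.

Definition endA (f : edge n) : vertex n := f.1.
Definition endB (f : edge n) : vertex n := f.1 + unitv f.2.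

Lemma ends_step v s : 
  (endA (step_edge v s) = v \/ endA (step_edge v s) = step_to v s) /\
  (endB (step_edge v s) = v \/ endB (step_edge v s) = step_to v s).
Proof.
rewrite /endA /endB /step_edge /step_to; case: s => i [] /=.
  by split; [left|right].
by split; [right|left]; rewrite // subrK.
Qed.

Lemma v_end_step v s : endA (step_edge v s) = v \/ endB (step_edge v s) = v.
Proof.
rewrite /endA /endB /step_edge /step_to; case: s => i [] /=.
  by left.
by right; rewrite subrK.
Qed.

Lemma edges_ends (r : seq (step n)) u f : f \in path_edges (u, r) ->
  endA f \in traj (u, r) /\ endB f \in traj (u, r).
Proof.
elim: r u => [|s r IH] u //=.
rewrite edges_cons traj_cons in_cons => /orP [/eqP ->|].
  have [[->|->] [->|->]] := ends_step u s;
    by rewrite !in_cons ?eqxx /= ?orbT.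
move=> /IH [h1 h2]; split; apply/orP; right.
  exact: h1. exact: h2.
Qed.

Lemma uniq_edges p : self_avoiding p -> uniq (path_edges p).
Proof.
case: p => u r; rewrite /self_avoiding.
elim: r u => [|s r IH] u //.
rewrite traj_cons edges_cons /= => /andP [hv hu].
rewrite (IH _ hu) andbT; apply/negP => /edges_ends [h1 h2].
by have [h|h] := v_end_step u s; move: hv; rewrite -[X in X \notin _]h ?h1 ?h2.
Qed.
End Det.


Section Geo.
Variables (R : realType) (n : nat).
Implicit Types (sg : edge n -> R) (p q : lpath n).

Lemma ptime_ge0 sg p : (forall f, 0 <= sg f) -> 0 <= passage_time sg p.
Proof. by move=> h; rewrite /passage_time; apply: sumr_ge0. Qed.

Lemma geo_char sg (h0 : forall f, 0 <= sg f) x p :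
  geodesic sg (origin n) x p <-> saw_from_to (origin n) x p /\
    forall q, saw_from_to (origin n) x q -> passage_time sg p <= passage_time sg q.
Proof.
have hlb : has_lbound [set passage_time sg r | r in [set r | saw_from_to (origin n) x r]].
  by exists 0 => _ [r _ <-]; exact: ptime_ge0.
split.
- move=> [hs he]; split => // q hq; rewrite he.
  have h := ge_inf hlb; move: (h (passage_time sg q)) => h'. by apply: h'; exists q.
- move=> [hs hq]; split => //; apply/eqP; rewrite eq_le; apply/andP; split.
  + apply: lb_le_inf; first by exists (passage_time sg p), p.
    by move=> _ [r hr <-]; exact: hq.
  + have h := ge_inf hlb; move: (h (passage_time sg p)) => h'.
    by apply: h'; exists p.
Qed.

Lemma sum_mod sg sg' e (s : seq (edge n)) : (forall f, f != e -> sg' f = sg f) ->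
  \sum_(f <- s) sg' f = \sum_(f <- s) sg f - (sg e - sg' e) * (count_mem e s)%:R.
Proof.
move=> h; elim: s => [|f s IH]; first by rewrite !big_nil mulr0 subr0.
rewrite !big_cons IH /=; have [->|ne] := eqVneq f e; rewrite ?eqxx ?(negbTE ne) /=.
  by rewrite natrD; lra.
by rewrite h // add0n; lra.
Qed.

Lemma ptime_mod sg sg' e p : (forall f, f != e -> sg' f = sg f) ->
  self_avoiding p ->
  passage_time sg' p = passage_time sg p - (sg e - sg' e) * (e \in path_edges p)%:R.
Proof.
move=> h sa; rewrite /passage_time (@sum_mod sg sg' e _ h) count_uniq_mem //.
exact: uniq_edges.
Qed.

Lemma mono (rank : lpath n -> nat) x e sg sg' p :
  (forall f, 0 <= sg f) -> (forall f, 0 <= sg' f) ->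
  (forall f, f != e -> sg' f = sg f) -> sg' e <= sg e ->
  first_geodesic rank sg x p -> e \in path_edges p ->
  first_geodesic rank sg' x p.
Proof.
move=> h0 h0' hoff hle [hg hmin] he.
have [hs hlp] := (geo_char _ h0 x p).1 hg.
have hT : forall q, saw_from_to (origin n) x q ->
  passage_time sg' q = passage_time sg q - (sg e - sg' e) * (e \in path_edges q)%:R.
  by move=> q [_ _ sq]; exact: ptime_mod.
have hd : 0 <= sg e - sg' e by lra.
split.
  apply/(geo_char _ h0'); split => // q hq.
  rewrite (hT _ hs) (hT _ hq) he; have := hlp _ hq.
  by case: (e \in path_edges q); rewrite /= ?mulr1 ?mulr0; lra.
move=> q /(geo_char _ h0') [hq hq']; apply: hmin; apply/(geo_char _ h0); split => // r hr.
have := hq' _ hs; rewrite (hT _ hs) (hT _ hq) he => h1.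
have := hlp _ hr; move: h1.
by case: (e \in path_edges q); rewrite /= ?mulr1 ?mulr0; lra.
Qed.
End Geo.

Section Meas.
Context (R : realType) (n : nat) (d : measure_display) (T : measurableType d).
Variables (env : edge n -> T -> R) (menv : forall f, measurable_fun setT (env f))
  (env0 : forall f w, 0 <= env f w) (rank : lpath n -> nat) (x : vertex n) (e : edge n).

Lemma meas_const (P : Prop) : measurable [set _ : T | P].
Proof.
have [hP|hP] := pselect P.
  by rewrite (_ : [set _ | P] = setT) //; apply/seteqP; split.
by rewrite (_ : [set _ | P] = set0) //; apply/seteqP; split.
Qed.

Lemma meas_imp (P : Prop) (Q : set T) : measurable Q -> measurable [set w | P -> Q w].
Proof.
move=> mQ; have [hP|hP] := pselect P.
  rewrite (_ : [set w | P -> Q w] = Q) //; apply/seteqP; split=> w /=; first by apply.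
  by move=> ? ?.
by rewrite (_ : [set w | P -> Q w] = setT) //; apply/seteqP; split=> w //=.
Qed.

Lemma meas_imp2 (P : Prop) (Q : set T) : measurable Q -> measurable [set w | Q w -> P].
Proof.
move=> mQ; have [hP|hP] := pselect P.
  by rewrite (_ : [set w | Q w -> P] = setT) //; apply/seteqP; split=> w //=.
rewrite (_ : [set w | Q w -> P] = ~` Q); first exact: measurableC.
by apply/seteqP; split=> w /= h; [move=> /h /hP | move=> /h].
Qed.

Lemma cbigcap (I : countType) (F : I -> set T) :
  (forall i, measurable (F i)) -> measurable (\bigcap_i F i).
Proof.
move=> h; rewrite -[X in measurable X]setCK setC_bigcap; apply: measurableC.
apply: countable_bigcupT_measurable; first exact: countableP.
by move=> i; apply: measurableC.
Qed.

Lemma cbigcup (I : countType) (F : I -> set T) :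
  (forall i, measurable (F i)) -> measurable (\bigcup_i F i).
Proof.
by move=> h; apply: countable_bigcupT_measurable; first exact: countableP.
Qed.

Definition Tw (w : T) (p : lpath n) : R := passage_time (env^~ w) p.

Lemma meas_ptime p : measurable_fun setT (fun w => Tw w p).
Proof. by rewrite /Tw /passage_time; apply: measurable_sum. Qed.

Lemma meas_le p q : measurable [set w | Tw w p <= Tw w q].
Proof.
rewrite -[X in measurable X]setTI; apply: measurable_fun_le => //;
  exact: meas_ptime.
Qed.

Definition GeoSet p := [set w | saw_from_to (origin n) x p /\
  forall q, saw_from_to (origin n) x q -> Tw w p <= Tw w q].

Lemma meas_geo p : measurable (GeoSet p).
Proof.
rewrite (_ : GeoSet p = [set _ | saw_from_to (origin n) x p] `&`
   \bigcap_q [set w | saw_from_to (origin n) x q -> Tw w p <= Tw w q]).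
  apply: measurableI; first exact: meas_const.
  by apply: cbigcap => q; apply: meas_imp; exact: meas_le.
apply/seteqP; split=> w /=.
  by move=> [h1 h2]; split => // q _; exact: h2.
by move=> [h1 h2]; split => // q; exact: h2.
Qed.

Lemma event_eq : [set w | exists p, first_geodesic rank (env^~ w) x p /\ e \in path_edges p]
  = \bigcup_p ([set _ | e \in path_edges p] `&` GeoSet p `&`
       \bigcap_q [set w | GeoSet q w -> (rank p <= rank q)%N]).
Proof.
apply/seteqP; split=> w /=.
  move=> [p [[hg hm] he]]; exists p => //; split; first split => //.
    exact/(geo_char _ _ _ (env0^~ w)).
  by move=> q _ /(geo_char _ _ _ (env0^~ w)); exact: hm.
move=> [p _ [[he hg] hm]]; exists p; split => //; split.
  exact/(geo_char _ _ _ (env0^~ w)).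
by move=> q /(geo_char _ _ _ (env0^~ w)) hq; exact: (hm q).
Qed.

Lemma meas_event :
  measurable [set w | exists p, first_geodesic rank (env^~ w) x p /\ e \in path_edges p].
Proof.
rewrite event_eq; apply: cbigcup => p; apply: measurableI; first apply: measurableI.
- exact: meas_const.
- exact: meas_geo.
- by apply: cbigcap => q; apply: meas_imp2; exact: meas_geo.
Qed.
End Meas.

Section Indep.
Context (R : realType) (n : nat) (dsp : measure_display) (Omega : measurableType dsp)
  (P : probability Omega R) (tau : edge n -> Omega -> R)
  (tau_meas : forall e, measurable_fun setT (tau e))
  (tau_indep : iid_indep P tau) (e : edge n) (Bt : set R) (mBt : measurable Bt).

Definition pr (A : set Omega) : R := fine (P A).
Lemma prE A : measurable A -> P A = (pr A)%:E.
Proof. by move=> mA; rewrite /pr fineK // fin_num_measure. Qed.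

Lemma meas_pre i (B : set R) : measurable B -> measurable (tau i @^-1` B).
Proof. by move=> mB; rewrite -[X in measurable X]setTI; apply: tau_meas. Qed.

Definition Gt := tau e @^-1` Bt.
Lemma mGt : measurable Gt. Proof. exact: meas_pre. Qed.

Definition Cyl : set (set Omega) := [set C | exists S : {fset edge n},
  exists B : edge n -> set R, [/\ e \notin S, (forall i, measurable (B i)) &
    C = \bigcap_(i in [set` S]) (tau i @^-1` B i)]].

Lemma cyl_meas C : Cyl C -> measurable C.
Proof.
move=> [S [B [_ mB ->]]].
rewrite (_ : \bigcap_(i in [set` S]) _ = \bigcap_i [set w | i \in S -> B i (tau i w)]).
  by apply: cbigcap => i; apply: meas_imp; exact: meas_pre.
apply/seteqP; split => w /= h i hi.
  by move=> iS; apply: h.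
exact: (h i I hi).
Qed.

Lemma cyl_indep C : Cyl C -> P (Gt `&` C) = (P Gt * P C)%E.
Proof.
move=> [S [B [eS mB ->]]].
pose B' := fun i => if i == e then Bt else B i.
have mB' : forall i, measurable (B' i) by move=> i; rewrite /B'; case: eqP.
have h1 := tau_indep (e |` S)%fset B' mB'.
have h2 := tau_indep S B mB.
rewrite h2 (_ : Gt `&` _ = \bigcap_(i in [set` (e |` S)%fset]) tau i @^-1` B' i).
  rewrite h1 big_fsetU1 //= /B' eqxx; congr (_ * _)%E.
  apply: eq_big_seq => i iS; case: eqP => // ie.
  by move: eS; rewrite -ie iS.
apply/seteqP; split => w /=.
  move=> [hg hc] i /=; rewrite !inE => /orP [/eqP -> | iS]; rewrite /B'.
    by rewrite eqxx.
  case: eqP => [ie|_]; first by move: eS; rewrite -ie iS.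
  exact: hc.
move=> h; split.
  by have := h e; rewrite /B' eqxx; apply; rewrite /= !inE eqxx.
move=> i iS; have := h i; rewrite /B'; case: eqP => [ie|_].
  by move: eS; rewrite -ie iS.
by apply; rewrite /= !inE iS orbT.
Qed.

Lemma cyl_setI : setI_closed Cyl.
Proof.
move=> C1 C2 [S1 [B1 [eS1 mB1 ->]]] [S2 [B2 [eS2 mB2 ->]]].
exists (S1 `|` S2)%fset, (fun i => (if i \in S1 then B1 i else setT) `&`
                               (if i \in S2 then B2 i else setT)); split.
- by rewrite !inE negb_or eS1 eS2.
- by move=> i; apply: measurableI; case: ifP.
apply/seteqP; split => w /=.
  move=> [h1 h2] i /=; rewrite !inE => /orP [iS|iS].
    split; first by rewrite iS; exact: h1.
    by case: ifP => // iS'; exact: h2.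
  split; last by rewrite iS; exact: h2.
  by case: ifP => // iS'; exact: h1.
move=> h; split => i /= iS.
  by have [] := h i; rewrite /= ?inE ?iS //= => + _; rewrite iS.
by have [] := h i; rewrite /= ?inE ?iS ?orbT //= => _; rewrite iS.
Qed.

Lemma compl_case (A : set Omega) : measurable A -> P (Gt `&` A) = (P Gt * P A)%E ->
  measurable (~` A) /\ P (Gt `&` ~` A) = (P Gt * P (~` A))%E.
Proof.
move=> mA hA; split; first exact: measurableC.
have hfin : (P Gt < +oo)%E by rewrite (prE _ mGt) ltry.
have hD : P (Gt `\` A) = (P Gt - P (Gt `&` A))%E.
  exact: (measureD mGt mA hfin).
have mGA : measurable (Gt `&` A) by apply: measurableI => //; exact: mGt.
rewrite -setDE hD hA probability_setC // (prE _ mGt) (prE _ mA).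
by rewrite -!EFinM -!EFinB; congr EFin; ring.
Qed.

Lemma union_case (F : (set Omega)^nat) : trivIset setT F ->
  (forall k, measurable (F k) /\ P (Gt `&` F k) = (P Gt * P (F k))%E) ->
  measurable (\bigcup_k F k) /\ P (Gt `&` \bigcup_k F k) = (P Gt * P (\bigcup_k F k))%E.
Proof.
move=> tF hF; split.
  by apply: bigcupT_measurable => k; case: (hF k).
have h1 : P (\bigcup_k (Gt `&` F k)) = (\sum_(k <oo | k \in setT) P (Gt `&` F k))%E.
  apply: measure_bigcup; last exact: trivIset_setIl.
  by move=> k _; apply: measurableI; [exact: mGt | case: (hF k)].
have h2 : P (\bigcup_k F k) = (\sum_(k <oo | k \in setT) P (F k))%E.
  apply: measure_bigcup => //.
  by move=> k _; case: (hF k).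
rewrite setI_bigcupr h1 h2 (prE _ mGt) -nneseriesZl; last by move=> i _; exact: measure_ge0.
by apply: eq_eseriesr => k _; rewrite (hF k).2 (prE _ mGt).
Qed.

Lemma indep_sigma : forall A, <<s Cyl >> A ->
  measurable A /\ P (Gt `&` A) = (P Gt * P A)%E.
Proof.
apply: (@dynkin_induction _ (g_sigma_algebraType Cyl) Cyl
   [set A | measurable A /\ P (Gt `&` A) = (P Gt * P A)%E]) => //.
- exact: cyl_setI.
- split => //; rewrite setIT probability_setT mule1 //.
- by move=> C hC; split; [exact: cyl_meas | exact: cyl_indep].
- by move=> A _ [mA hA]; exact: compl_case.
- by move=> F _ tF hF; exact: union_case.
Qed.
End Indep.
Theorem lemma2p1 (R : realType) (n : nat) (hn : (2 <= n)%N)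
  (dsp : measure_display) (Omega : measurableType dsp) (P : probability Omega R)
  (mu : probability R R) (tau : edge n -> Omega -> R)
  (tau_meas : forall e, measurable_fun setT (tau e))
  (tau_nonneg : forall e w, 0 <= tau e w)
  (tau_law : forall e (A : set R), measurable A -> P (tau e @^-1` A) = mu A)
  (tau_indep : iid_indep P tau)
  (standing : (ess_inf_law mu = 0 -> (distF mu (ess_inf_law mu) < (@p_c R n)%:E)%E) /\
              (0 < ess_inf_law mu -> (distF mu (ess_inf_law mu) < (@vec_p_c R n)%:E)%E))
  (rank : lpath n -> nat)
  (rank_inj : forall p q, self_avoiding p -> self_avoiding q -> rank p = rank q -> p = q)
  (x : vertex n) (t : R) (ht : 0 < t) (e : edge n)
  (hpos : (0 < P [set w | exists p, first_geodesic rank (tau^~ w) x p /\ e \in path_edges p])%E) :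
  (P [set w | (tau e w <= t)%R] <=
   P ([set w | (tau e w <= t)%R] `&`
      [set w | exists p, first_geodesic rank (tau^~ w) x p /\ e \in path_edges p])
   * (P [set w | exists p, first_geodesic rank (tau^~ w) x p /\ e \in path_edges p])^-1)%E.
Proof.
set Bt := [set r : R | r <= t].
have mBt : measurable Bt.
  rewrite (_ : Bt = `]-oo, t]%classic); first exact: measurable_itv.
  by apply/seteqP; split => r; rewrite /= in_itv /=.
set env' := fun f w => if f == e then t else tau f w.
set Aset := [set w | exists p, first_geodesic rank (tau^~ w) x p /\ e \in path_edges p].
set Bset := [set w | exists p, first_geodesic rank ((fun f => env' f w)) x p /\ e \in path_edges p].
set Gset := [set w | tau e w <= t].
have env0 : forall f w, 0 <= env' f w.
  by move=> f w; rewrite /env'; case: eqP => _ //; exact: ltW.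
have hBsig : <<s Cyl R n dsp Omega tau e >> Bset.
  have menv' : forall f, measurable_fun setT
     ((fun w => env' f w) : g_sigma_algebraType (Cyl R n dsp Omega tau e) -> R).
    move=> f; rewrite /env'; case: eqP => [_|/eqP ne]; first exact: measurable_cst.
    move=> _ Y mY; apply: sub_sigma_algebra.
    exists [fset f]%fset, (fun _ => Y); split => //.
      by rewrite inE eq_sym.
    apply/seteqP; split => w /=.
      by move=> [_ hY] i /=; rewrite inE => /eqP ->.
    by move=> h; split => //; apply: h; rewrite /= inE.
  exact: (@meas_event _ _ _ (g_sigma_algebraType (Cyl R n dsp Omega tau e)) (fun f w => env' f w) menv' env0 rank x e).
have [mB hind] := indep_sigma _ _ _ _ P _ tau_meas tau_indep _ _ mBt _ hBsig.
have mA : measurable Aset.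
  exact: (meas_event _ _ _ _ _ tau_meas tau_nonneg rank x e).
have mG : measurable Gset by exact: (mGt _ _ _ _ _ tau_meas e _ mBt).
have i1 : Gset `&` Bset `<=` Gset `&` Aset.
  move=> w [hg [p [hf he]]]; split => //; exists p; split => //.
  apply: (mono _ _ _ _ _ (fun f => env' f w) (tau^~ w) _ _ _ _ _ hf he).
  - by move=> f; exact: env0.
  - by move=> f; exact: tau_nonneg.
  - by move=> f ne; rewrite /env' (negbTE ne).
  - by rewrite /env' eqxx.
have i2 : Aset `\` Gset `<=` Bset `\` Gset.
  move=> w [[p [hf he]] hg]; split => //; exists p; split => //.
  apply: (mono _ _ _ _ _ (tau^~ w) (fun f => env' f w) _ _ _ _ _ hf he).
  - by move=> f; exact: tau_nonneg.
  - by move=> f; exact: env0.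
  - by move=> f ne; rewrite /env' (negbTE ne).
  - rewrite /env' eqxx; rewrite /Gset /= in hg.
    by rewrite leNgt; apply/negP => /ltW.
have mGA : measurable (Gset `&` Aset) by exact: measurableI.
have mGB : measurable (Gset `&` Bset) by exact: measurableI.
have mAG : measurable (Aset `\` Gset) by exact: measurableD.
have mBG : measurable (Bset `\` Gset) by exact: measurableD.
have hind' : P (Gset `&` Bset) = (P Gset * P Bset)%E := hind.
have hDI : P Aset = (P (Aset `\` Gset) + P (Gset `&` Aset))%E.
  rewrite setIC; exact: measureDI.
have hD : P (Bset `\` Gset) = (P Bset - P (Gset `&` Bset))%E.
  rewrite setIC; apply: measureD => //.
  by apply: (le_lt_trans (probability_le1 P mB)); exact: ltry.
have l1 : (P (Gset `&` Bset) <= P (Gset `&` Aset))%E.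
  by apply: le_measure => //; rewrite inE.
have l2 : (P (Aset `\` Gset) <= P (Bset `\` Gset))%E.
  by apply: le_measure => //; rewrite inE.
have g0 := probability_le1 P mG.
have gge0 : (0 <= P Gset)%E := measure_ge0 P Gset.
have bge0 : (0 <= P Bset)%E := measure_ge0 P Bset.
have pos := hpos.
rewrite -/Aset in pos.
move: hind' hDI hD l1 l2 g0 gge0 bge0 pos.
rewrite !(prE _ _ _ _ _ mGA) !(prE _ _ _ _ _ mGB) !(prE _ _ _ _ _ mAG)
  !(prE _ _ _ _ _ mBG) !(prE _ _ _ _ _ mA) !(prE _ _ _ _ _ mB) !(prE _ _ _ _ _ mG).
set a := pr _ _ _ _ (Gset `&` Aset).
set bg := pr _ _ _ _ (Gset `&` Bset).
set u := pr _ _ _ _ (Aset `\` Gset).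
set v := pr _ _ _ _ (Bset `\` Gset).
set pA := pr _ _ _ _ Aset.
set b := pr _ _ _ _ Bset.
set g := pr _ _ _ _ Gset.
rewrite -!EFinM -!EFinD.
move=> [h1] [h2] [h3]; rewrite !lee_fin !lte_fin => l1 l2 g1 g0 b0 pA0.
have {}g1 : g <= 1 by rewrite -lee_fin.
have {}g0 : 0 <= g by rewrite -lee_fin.
have {}b0 : 0 <= b by rewrite -lee_fin.
have {}pA0 : 0 < pA by rewrite -lte_fin.
rewrite inver gt_eqF // -EFinM lee_fin ler_pdivlMr //.
have k1 : 0 <= (1 - g) * (a - g * b) by apply: mulr_ge0; lra.
have k2 : g * (pA - a - b + g * b) <= 0.
  by apply: mulr_ge0_le0 => //; lra.
nra.
Qed.
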